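(* Let $\sigma$ be a reflection on a lattice $L$, regarded also as a reflection on the torus $T=\mathrm{T}(1)\otimes L=(\mathbb{R}\otimes L)/L$. Then sending $b\in L$ to the residue class of $b/2$ in $T$ gives a bijection between markings $\pm(b,\beta)$ of $\sigma$ (on $L$) and elements $h\in T$ which are markings of $\sigma$ (on $T$).
   Context: A lattice is a free abelian group of finite rank. A reflection on $L$ is an automorphism conjugate in $GL(r,\mathbb{Q})$ to $\mathrm{diag}(-1,1,\dots,1)$. A strict marking of $\sigma$ on $L$ is a pair $(b,\beta)$ with $b\in L$, $\beta:L\to\mathbb{Z}$ a homomorphism, and $\sigma(x)=x+\beta(x)b$ for all $x\in L$; a marking is an equivalence class $\pm(b,\beta)$ of strict markings up to sign. On $T$ (written additively), $\sigma$ is trivial mod $2$ if it fixes every $x\in T$ with $2x=0$, and a marking of $\sigma$ is an element $h\in T$ lying in the identity component of $\{x\in T:\sigma(x)=-x\}$ (equivalently $h\in\mathrm{T}(1)\otimes\ker(1+\sigma)$), with $2h=0$, and with $h\neq0$ if $\sigma$ is nontrivial mod $2$. *)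

(* Defs.v *)
From HB Require Import structures.
From mathcomp Require Import all_boot all_order all_algebra.
From mathcomp Require Import reals.
Set Implicit Arguments. Unset Strict Implicit. Unset Printing Implicit Defensive.
Import Order.TTheory GRing.Theory Num.Theory.
Local Open Scope ring_scope.

(* The lattice L is modelled as Z^r (column vectors 'cV[int]_r); an
   endomorphism of L is an integer matrix acting on the left. *)

Definition refl_diag (r : nat) : 'M[rat]_r :=
  diag_mx (\row_(i < r) (if val i == 0%N then -1 else 1)).

Definition reflection (r : nat) (M : 'M[int]_r) : Prop :=
  (0 < r)%N /\ M \in unitmx /\
  exists P : 'M[rat]_r, P \in unitmx /\
    map_mx (fun z : int => z%:~R) M = invmx P *m refl_diag r *m P.

Definition strict_marking (r : nat) (M : 'M[int]_r)
  (b : 'cV[int]_r) (beta : 'rV[int]_r) : Prop :=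
  forall x : 'cV[int]_r, M *m x = x + (beta *m x) ord0 ord0 *: b.

(* ---- The torus T = (R (x) L)/L = R^r / Z^r, elements represented by
   vectors of R^r, with equality modulo Z^r. ---- *)
Definition mxR (R : realType) (r : nat) (v : 'cV[int]_r) : 'cV[R]_r :=
  map_mx (fun z : int => z%:~R) v.

Definition in_lattice (R : realType) (r : nat) (x : 'cV[R]_r) : bool :=
  [forall i, x i ord0 \is a Num.int].

Definition teq (R : realType) (r : nat) (x y : 'cV[R]_r) : Prop :=
  in_lattice (x - y).

Definition tact (R : realType) (r : nat) (M : 'M[int]_r) (x : 'cV[R]_r)
  : 'cV[R]_r := map_mx (fun z : int => z%:~R) M *m x.

Definition trivial_mod2 (R : realType) (r : nat) (M : 'M[int]_r) : Prop :=
  forall x : 'cV[R]_r, in_lattice (2%:R *: x) -> teq (tact M x) x.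

Definition in_real_span_minus (R : realType) (r : nat) (M : 'M[int]_r)
  (x : 'cV[R]_r) : Prop :=
  exists (n : nat) (vs : 'I_n -> 'cV[int]_r) (ts : 'I_n -> R),
    (forall i, M *m vs i = - vs i) /\ x = \sum_(i < n) ts i *: mxR R (vs i).

Definition torus_marking (R : realType) (r : nat) (M : 'M[int]_r)
  (h : 'cV[R]_r) : Prop :=
  (exists x, in_real_span_minus M x /\ teq h x) /\
  in_lattice (2%:R *: h) /\
  (~ trivial_mod2 R M -> ~~ in_lattice h).

Definition half_class (R : realType) (r : nat) (b : 'cV[int]_r) : 'cV[R]_r :=
  (2%:R)^-1 *: mxR R b.

Arguments torus_marking R [r] M h.

(* Main.v *)
Require Import Defs.
From HB Require Import structures.
From mathcomp Require Import all_boot all_order all_algebra.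
From mathcomp Require Import reals.
From mathcomp Require Import ring lra zify.
Import Order.TTheory GRing.Theory Num.Theory.
Local Open Scope ring_scope.
Set Implicit Arguments. Unset Strict Implicit. Unset Printing Implicit Defensive.
From Stdlib Require Import Classical.
Notation mI F := (map_mx (fun z : int => z%:~R : F)).


Lemma mIM (F : numFieldType) m n p (A : 'M[int]_(m,n)) (B : 'M[int]_(n,p)) :
  mI F (A *m B) = mI F A *m mI F B.
Proof. exact: (map_mxM intr). Qed.
Lemma mI1 (F : numFieldType) n : mI F (1%:M : 'M[int]_n) = 1%:M.
Proof. exact: (map_mx1 intr). Qed.
Lemma mIB (F : numFieldType) m n (A B : 'M[int]_(m,n)) : mI F (A - B) = mI F A - mI F B.
Proof. exact: (map_mxB intr). Qed.
Lemma mID (F : numFieldType) m n (A B : 'M[int]_(m,n)) : mI F (A + B) = mI F A + mI F B.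
Proof. exact: (map_mxD intr). Qed.
Lemma mIN (F : numFieldType) m n (A : 'M[int]_(m,n)) : mI F (- A) = - mI F A.
Proof. exact: (map_mxN intr). Qed.
Lemma mIZ (F : numFieldType) m n (a : int) (A : 'M[int]_(m,n)) : mI F (a *: A) = a%:~R *: mI F A.
Proof. by apply/matrixP => i j; rewrite !mxE intrM. Qed.
Lemma mI_inj (F : numFieldType) m n : injective (mI F : 'M[int]_(m,n) -> _).
Proof. by move=> A B /matrixP E; apply/matrixP => i j; move: (E i j); rewrite !mxE; apply: intr_inj. Qed.

Lemma refl_diagE r : refl_diag r.+1 = 1%:M - 2%:R *: delta_mx 0 0.
Proof.
apply/matrixP => -[[|i] Hi] [[|j] Hj]; rewrite !mxE /=.
- by rewrite mulr1n mulr1.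
- by rewrite mulr0n mulr0 subr0.
- by rewrite mulr0n mulr0 subr0.
- by rewrite mulr0 subr0.
Qed.

Lemma refl_facts r (M : 'M[int]_r.+1) : reflection M ->
  [/\ M *m M = 1%:M, M != 1%:M & exists (u : 'cV[rat]_r.+1) (w : 'rV[rat]_r.+1),
     mI rat (M - 1%:M) = u *m w].
Proof.
case=> _ [_ [P [Pu E]]].
have DD : refl_diag r.+1 *m refl_diag r.+1 = 1%:M.
  rewrite /refl_diag mulmx_diag; apply/matrixP => i j; rewrite !mxE.
  by case: ifP => _; rewrite ?mulrNN mulr1.
set D := refl_diag _ in E DD.
have EI : invmx P *m P = 1%:M by rewrite mulVmx.
split.
- apply: (@mI_inj rat); rewrite mIM E mI1.
  have -> : invmx P *m D *m P *m (invmx P *m D *m P) = invmx P *m (D *m D) *m P.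
    by rewrite !mulmxA mulmxK // -!mulmxA.
  by rewrite DD mulmx1 EI.
- apply/eqP => M1; move: E; rewrite M1 mI1 => E.
  have : D = 1%:M.
    have -> : D = P *m (invmx P *m D *m P) *m invmx P.
      by rewrite !mulmxA mulmxV // mul1mx mulmxK.
    by rewrite -E mulmx1 mulmxV.
  move/matrixP/(_ 0 0); rewrite !mxE /= => /eqP.
  by rewrite -subr_eq0 -opprD oppr_eq0.
- exists (invmx P *m (- 2%:R *: delta_mx 0 (0 : 'I_1))), (delta_mx (0:'I_1) 0 *m P).
  rewrite mIB E mI1.
  have -> : (1%:M : 'M[rat]_r.+1) = invmx P *m 1%:M *m P by rewrite mulmx1.
  rewrite -mulmxBl -mulmxBr /D refl_diagE addrAC subrr add0r.
  by rewrite -!mulmxA -scalemxAl (mulmxA (delta_mx _ _)) mul_delta_mx scaleNr mulNmx scalemxAl.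
Qed.
Lemma markingE r (M : 'M[int]_r) b beta :
  strict_marking M b beta <-> M = 1%:M + b *m beta.
Proof.
have key : forall x : 'cV[int]_r, (beta *m x) 0 0 *: b = b *m (beta *m x).
  by move=> x; rewrite {2}[beta *m x]mx11_scalar mul_mx_scalar.
split => [H|->].
  apply/matrixP => i j.
  have E : M *m delta_mx j (0:'I_1) = (1%:M + b *m beta) *m delta_mx j 0.
    by rewrite (H (delta_mx j 0)) key mulmxDl mul1mx mulmxA.
  have := congr1 (fun v : 'cV[int]_r => v i 0) E; rewrite -!colE !mxE; exact: id.
by rewrite /strict_marking => x; rewrite key mulmxDl mul1mx mulmxA.
Qed.

Lemma canon r (M : 'M[int]_r.+1) : reflection M ->
  exists (b0 : 'cV[int]_r.+1) (beta0 : 'rV[int]_r.+1) (Li : 'M[int]_r.+1) (k : 'I_r.+1),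
    M = 1%:M + b0 *m beta0 /\ Li *m b0 = delta_mx k 0.
Proof.
move=> refl; have [MM M1 [u [w Euw]]] := refl_facts refl.
have [L Lu [R Ru [d _ EN]]] := int_Smith_normal_form (M - 1%:M).
set D := \matrix_(i, j) _ in EN.
have ED : D = invmx L *m (M - 1%:M) *m invmx R.
  by rewrite EN !mulmxA mulVmx // mul1mx mulmxK.
have EDQ : mI rat D = (mI rat (invmx L) *m u) *m (w *m mI rat (invmx R)).
  by rewrite ED !mIM Euw !mulmxA.
set u' := _ *m u in EDQ; set w' := w *m _ in EDQ.
have DE : forall i j, mI rat D i j = u' i 0 * w' 0 j.
  by move=> i j; rewrite EDQ mxE big_ord1.
have [k Hk] : exists k : 'I_r.+1, forall i, i != k -> d`_i = 0.
  case: (pickP (fun k : 'I_r.+1 => d`_k != 0)) => [k dk|none]; last first.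
    by exists 0 => i _; move: (none i) => /= /negbFE/eqP.
  exists k => i ik.
  have Dkk := DE k k; rewrite [LHS]mxE [D k k]mxE eqxx mulr1n in Dkk.
  have ik2 : (i == k :> nat) = false by exact: negbTE ik.
  have Dik := DE i k; rewrite [LHS]mxE [D i k]mxE ik2 mulr0n in Dik.
  have Dii := DE i i; rewrite [LHS]mxE [D i i]mxE eqxx mulr1n in Dii.
  have wk : w' 0 k != 0.
    by apply: contra dk => /eqP wk0; rewrite -(intr_eq0 rat) Dkk wk0 mulr0.
  have ui : u' i 0 = 0.
    by move/eqP: Dik; rewrite eq_sym mulf_eq0 (negbTE wk) orbF => /eqP.
  by apply/eqP; rewrite -(intr_eq0 rat) Dii ui mul0r.
exists (L *m delta_mx k 0), (d`_k *: (delta_mx 0 k *m R)), (invmx L), k.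
split; last by rewrite mulmxA mulVmx // mul1mx.
have DE2 : D = d`_k *: delta_mx k k.
  apply/matrixP => i j; rewrite !mxE.
  have -> : (i == j :> nat) = (i == j) by [].
  have [<-|ij] := eqVneq i j.
    rewrite mulr1n andbb; have [->|ik] := eqVneq i k; first by rewrite mulr1.
    by rewrite Hk // mulr0.
  rewrite mulr0n; have [ik|ik] := eqVneq i k; last by rewrite mulr0.
  by rewrite -ik /= eq_sym (negbTE ij) mulr0.
rewrite DE2 in EN.
rewrite -scalemxAr -scalemxAl in EN.
rewrite -scalemxAr mulmxA -(mulmxA L) mul_delta_mx -EN.
by rewrite addrC subrK.
Qed.

Definition isint (R : realType) m n (A : 'M[R]_(m,n)) := forall i j, A i j \is a Num.int.

Section Real.
Variable R : realType.

Lemma isint_mI m n (A : 'M[int]_(m,n)) : isint (mI R A).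
Proof. by move=> i j; rewrite mxE intr_int. Qed.
Lemma isint0 m n : isint (0 : 'M[R]_(m,n)).
Proof. by move=> i j; rewrite mxE. Qed.
Lemma isintD m n (A B : 'M[R]_(m,n)) : isint A -> isint B -> isint (A + B).
Proof. by move=> hA hB i j; rewrite mxE rpredD. Qed.
Lemma isintN m n (A : 'M[R]_(m,n)) : isint A -> isint (- A).
Proof. by move=> hA i j; rewrite mxE rpredN. Qed.
Lemma isintB m n (A B : 'M[R]_(m,n)) : isint A -> isint B -> isint (A - B).
Proof. by move=> hA hB; apply: isintD => //; apply: isintN. Qed.
Lemma isint_mul m n p (A : 'M[R]_(m,n)) (B : 'M[R]_(n,p)) : isint A -> isint B -> isint (A *m B).
Proof. by move=> hA hB i j; rewrite mxE rpred_sum // => l _; rewrite rpredM. Qed.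
Lemma isintZ m n (a : R) (A : 'M[R]_(m,n)) : a \is a Num.int -> isint A -> isint (a *: A).
Proof. by move=> ha hA i j; rewrite mxE rpredM. Qed.
Lemma latticeE r (x : 'cV[R]_r) : in_lattice x <-> isint x.
Proof.
split => [/forallP h i j|h]; first by rewrite (ord1 j); apply: h.
by apply/forallP => i; apply: h.
Qed.

Lemma prim r (b0 : 'cV[int]_r) (Li : 'M[int]_r) k : Li *m b0 = delta_mx k 0 ->
  forall t : R, isint (t *: mI R b0) -> t \is a Num.int.
Proof.
move=> E t h; have := isint_mul (isint_mI Li) h k 0.
by rewrite -scalemxAr -mIM E !mxE !eqxx /= mulr1.
Qed.
End Real.

Lemma mark_facts r (M : 'M[int]_r) (b : 'cV[int]_r) (beta : 'rV[int]_r) : M *m M = 1%:M -> M != 1%:M ->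
  M = 1%:M + b *m beta ->
  [/\ (beta *m b) 0 0 = -2, M *m b = - b, b != 0 & beta != 0].
Proof.
move=> MM M1 E.
have bn : b != 0 by apply: contra M1 => /eqP b0; rewrite E b0 mul0mx addr0.
have betan : beta != 0 by apply: contra M1 => /eqP b0; rewrite E b0 mulmx0 addr0.
have Nn : b *m beta != 0 by apply: contra M1 => /eqP b0; rewrite E b0 addr0.
set s := (beta *m b) 0 0.
have NN : b *m beta *m (b *m beta) = s *: (b *m beta).
  by rewrite mulmxA -(mulmxA b) [beta *m b]mx11_scalar mul_mx_scalar scalemxAl.
have s2 : s = -2.
  have H : (1 + 1 + s) *: (b *m beta) = 0.
    move: MM; rewrite E mulmxDl !mulmxDr !mul1mx mulmx1 NN !scalerDl !scale1r.
    by move/(congr1 (fun X : 'M[int]_r => X - 1%:M)); rewrite subrr addrC !addrA addNr add0r addrC !addrA.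
  move/eqP: H; rewrite scalemx_eq0 (negbTE Nn) orbF => /eqP h.
  by apply/eqP; rewrite -subr_eq0 opprK -h; apply/eqP; ring.
split => //.
rewrite E mulmxDl mul1mx -mulmxA [beta *m b]mx11_scalar mul_mx_scalar -/s s2.
by rewrite (_ : (-2 : int) = - (1 + 1)) // scaleNr scalerDl scale1r opprD addrA subrr add0r.
Qed.

Lemma nz_entry m n (A : 'M[int]_(m,n)) : A != 0 -> exists i j, A i j != 0.
Proof.
move=> nz; case: (pickP (fun ij : 'I_m * 'I_n => A ij.1 ij.2 != 0)) => [[i j] h|none].
  by exists i, j.
by case/eqP: nz; apply/matrixP => i j; move: (none (i,j)) => /negbFE/eqP ->; rewrite mxE.
Qed.

Lemma relate (R : realType) r (M : 'M[int]_r) (b0 : 'cV[int]_r) (beta0 : 'rV[int]_r)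
  (Li : 'M[int]_r) k (b : 'cV[int]_r) (beta : 'rV[int]_r) :
  M *m M = 1%:M -> M != 1%:M -> M = 1%:M + b0 *m beta0 -> Li *m b0 = delta_mx k 0 ->
  M = 1%:M + b *m beta ->
  exists l : int, [/\ b = l *: b0, beta0 = l *: beta & l * (beta *m b0) 0 0 = -2].
Proof.
move=> MM M1 E0 EL Eb.
have [_ _ bn betan] := mark_facts MM M1 Eb.
have [s0 _ b0n _] := mark_facts MM M1 E0.
have NE : b0 *m beta0 = b *m beta by apply: (@addrI _ 1%:M); rewrite -E0 -Eb.
have [i0 [j betaj]] := nz_entry betan.
rewrite (ord1 i0) in betaj => {i0}.
have col i : (b i 0)%:~R * (beta 0 j)%:~R = (b0 i 0)%:~R * (beta0 0 j)%:~R :> R.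
  by rewrite -!intrM; have := congr1 (fun X : 'M[int]_r => X i j) NE; rewrite !mxE !big_ord1 => ->.
have nzj : (beta 0 j)%:~R != 0 :> R by rewrite intr_eq0.
set t : R := (beta0 0 j)%:~R / (beta 0 j)%:~R.
have Et : t *: mI R b0 = mI R b.
  apply/matrixP => i l; rewrite (ord1 l) !mxE.
  apply: (mulIf nzj); rewrite col /t; field; exact: nzj.
have : t \is a Num.int by apply: (prim EL); rewrite Et; exact: isint_mI.
case/intrP => l tl.
have bE : b = l *: b0 by apply: (@mI_inj R); rewrite mIZ -tl Et.
exists l; split => //.
  have [i [i1 b0i]] := nz_entry b0n; rewrite (ord1 i1) in b0i => {i1}.
  apply/matrixP => i' j'; rewrite (ord1 i') mxE.
  have := congr1 (fun X : 'M[int]_r => X i j') NE; rewrite bE -scalemxAl !mxE !big_ord1 => h.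
  by apply: (mulfI b0i); rewrite h mulrCA.
have : beta0 = l *: beta.
  have [i [i1 b0i]] := nz_entry b0n; rewrite (ord1 i1) in b0i => {i1}.
  apply/matrixP => i' j'; rewrite (ord1 i') mxE.
  have := congr1 (fun X : 'M[int]_r => X i j') NE; rewrite bE -scalemxAl !mxE !big_ord1 => h.
  by apply: (mulfI b0i); rewrite h mulrCA.
by move=> e; rewrite -s0 e -scalemxAl [in RHS]mxE.
Qed.
Lemma bound2 (l m : int) : l * m = -2 -> -2 <= l <= 2 /\ l != 0.
Proof.
move=> h; have [mp|mn] := ltrP 0 m.
  split; [apply/andP; split|]; nia.
have [m0|mneg] := eqVneq m 0; first by move: h; rewrite m0 mulr0.
split; [apply/andP; split|]; nia.
Qed.

Lemma parity (l l' m m' mu : int) : l * m = -2 -> l' * m' = -2 -> l - l' = 2 * mu ->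
  l' = l \/ l' = - l.
Proof.
move=> /bound2 [/andP [h1 h2] h3] /bound2 [/andP [h4 h5] h6] h7.
lia.
Qed.
Lemma scale_cancel (l : int) m n (A B : 'M[int]_(m,n)) : l != 0 -> l *: A = l *: B -> A = B.
Proof.
move=> l0 /eqP; rewrite -subr_eq0 -scalerBr scalemx_eq0 (negbTE l0) /= subr_eq0.
by move/eqP.
Qed.

Theorem lemma2p18 (R : realType) (r : nat) (M : 'M[int]_r) :
  reflection M ->
  (forall b beta, strict_marking M b beta ->
     torus_marking R M (half_class R b) /\
     teq (half_class R b) (half_class R (- b))) /\
  (forall b beta b' beta', strict_marking M b beta -> strict_marking M b' beta' ->
     teq (half_class R b) (half_class R b') ->
     (b' = b /\ beta' = beta) \/ (b' = - b /\ beta' = - beta)) /\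
  (forall h : 'cV[R]_r, torus_marking R M h ->
     exists b beta, strict_marking M b beta /\ teq (half_class R b) h).
Proof.
case: r M => [|r] M refl; first by case: refl.
have [MM M1 _] := refl_facts refl.
have [b0 [beta0 [Li [k [E0 EL]]]]] := canon refl.
have two : (2%:R : R) != 0 by rewrite pnatr_eq0.
split; [|split].
- move=> b beta /markingE Eb.
  have [s2 Mb _ _] := mark_facts MM M1 Eb.
  split; last first.
    apply/latticeE; rewrite /teq /half_class /mxR mIN -scalerBr opprK.
    rewrite -mulr2n -scaler_nat scalerA mulVf // scale1r; exact: isint_mI.
  split.
    exists (half_class R b); split; last by apply/latticeE; rewrite subrr; exact: isint0.
    exists 1%N, (fun _ => b), (fun _ => 2%:R^-1); split => //.
    by rewrite big_ord1.
  split.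
    apply/latticeE; rewrite /half_class scalerA mulfV // scale1r; exact: isint_mI.
  move=> nt; apply/negP => /latticeE hl; apply: nt => x /latticeE x2; apply/latticeE.
  rewrite /tact Eb mID mI1 mIM mulmxDl mul1mx addrAC subrr add0r -mulmxA.
  have -> : mI R b *m (mI R beta *m x) = (half_class R b) *m (mI R beta *m (2%:R *: x)).
    by rewrite /half_class -scalemxAl -!scalemxAr scalerA mulVf // scale1r.
  apply: isint_mul; first exact: hl. apply: isint_mul; [exact: isint_mI | exact: x2].
- move=> b beta b' beta' /markingE Eb /markingE Eb' /latticeE hh.
  have [l [bE beE lm]] := relate R MM M1 E0 EL Eb.
  have [l' [bE' beE' lm']] := relate R MM M1 E0 EL Eb'.
  have : ((l - l')%:~R / 2 : R) \is a Num.int.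
    apply: (prim EL).
    have -> : ((l - l')%:~R / 2 : R) = 2%:R^-1 * l%:~R - 2%:R^-1 * l'%:~R by rewrite intrB; field.
    by move: hh; rewrite /half_class /mxR bE bE' !mIZ !scalerA -scalerBl.
  case/intrP => mu hmu.
  have e : l - l' = 2 * mu.
    by apply: (@intr_inj R); rewrite intrM -hmu mulrC divfK.
  have [l0 _] : l != 0 /\ True by have [_ ?] := bound2 lm.
  case: (parity lm lm' e) => el; rewrite el in bE' beE'.
    left; split; first by rewrite bE' bE.
    by apply: (scale_cancel l0); rewrite -beE -beE'.
  right; split; first by rewrite bE' bE scaleNr.
  by apply: (scale_cancel l0); rewrite scalerN -beE beE' scaleNr opprK.
- move=> h [[x [[n [vs [ts [Hv Ex]]]] /latticeE hx]] [/latticeE h2 hnt]].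
  have vE i : mI R (vs i) = (- ((beta0 *m vs i) 0 0)%:~R / 2) *: mI R b0.
    have e := Hv i; rewrite E0 mulmxDl mul1mx -mulmxA [beta0 *m vs i]mx11_scalar mul_mx_scalar in e.
    move/(congr1 (mI R)): e; rewrite mID mIZ mIN => e.
    set c := ((beta0 *m vs i) 0 0)%:~R in e *.
    have e' : c *: mI R b0 = - mI R (vs i) - mI R (vs i).
      by apply: (@addrI _ (mI R (vs i))); rewrite e addrA subrr add0r.
    apply: (scalerI two); rewrite scalerA mulrC divfK // scaleNr e' opprD !opprK.
    by rewrite scaler_nat mulr2n.
  set t := \sum_i ts i * (- ((beta0 *m vs i) 0 0)%:~R / 2).
  have xE : x = t *: mI R b0.
    by rewrite Ex scaler_suml; apply: eq_bigr => i _; rewrite /mxR vE scalerA.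
  have : (2%:R * t) \is a Num.int.
    apply: (prim EL); rewrite -scalerA -xE.
    have -> : 2%:R *: x = 2%:R *: h - 2%:R *: (h - x) by rewrite scalerBr opprB addrC subrK.
    apply: isintB => //; apply: isintZ => //; exact: natr_int.
  case/intrP => n2 hn.
  have dn := divz_eq n2 2.
  set q := (n2 %/ 2)%Z in dn; set rho := (n2 %% 2)%Z in dn.
  have rho01 : rho = 0 \/ rho = 1.
    have h0 : 0 <= rho by apply: modz_ge0.
    have h1 : rho < 2 by apply: ltz_pmod.
    lia.
  have tE : t = q%:~R + rho%:~R / 2.
    apply: (mulfI two); rewrite hn {1}dn intrD intrM; field. all: try by [].
  case: rho01 => rE.
  + have xq : x = q%:~R *: mI R b0 by rewrite xE tE rE mul0r addr0.
    have hl : isint h.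
      have -> : h = (h - x) + q%:~R *: mI R b0 by rewrite -xq subrK.
      apply: isintD => //.
      apply: isintZ; [exact: intr_int | exact: isint_mI].
    have triv : trivial_mod2 R M.
      by apply: NNPP => nt; move: (hnt nt) => /negP; apply; apply/latticeE.
    have even j : exists g, beta0 0 j = g * 2.
      have := triv (2%:R^-1 *: mI R (delta_mx j 0)).
      have prem : in_lattice (2%:R *: (2%:R^-1 *: mI R (delta_mx j 0))).
        by apply/latticeE; rewrite scalerA mulfV // scale1r; exact: isint_mI.
      move=> /(_ prem) /latticeE H.
      have : ((beta0 0 j)%:~R / 2 : R) \is a Num.int.
        apply: (prim EL).
        move: H; rewrite /tact E0 mID mI1 mIM mulmxDl mul1mx addrAC subrr add0r.
        rewrite -mulmxA -scalemxAr -mIM.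
        have -> : beta0 *m delta_mx j 0 = (beta0 0 j)%:M.
          by rewrite [LHS]mx11_scalar -colE mxE.
        rewrite (map_scalar_mx intr) -scalemxAr mul_mx_scalar scalerA.
        by rewrite mulrC.
      case/intrP => g hg; exists g.
      by apply: (@intr_inj R); rewrite intrM -hg divfK.
    pose gam := \row_j (divz (beta0 ord0 j) 2).
    have beE : beta0 = 2 *: gam.
      apply/matrixP => i j; rewrite (ord1 i) !mxE; have [g ->] := even j.
      by rewrite mulzK // mulrC.
    exists (2 *: b0), gam; split.
      by apply/markingE; rewrite E0 beE -scalemxAr scalemxAl.
    apply/latticeE; rewrite /half_class /mxR mIZ scalerA mulVf // scale1r.
    by apply: isintB => //; exact: isint_mI.
  + exists b0, beta0; split; first exact: (proj2 (markingE M b0 beta0) E0).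
    apply/latticeE.
    have -> : half_class R b0 - h = - (h - x) - q%:~R *: mI R b0.
      rewrite xE tE rE /half_class /mxR; apply/matrixP => i j; rewrite !mxE; ring.
    apply: isintB; first exact: isintN.
    apply: isintZ; [exact: intr_int | exact: isint_mI].
Qed.
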